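(* Let $g\mapsto g^*$ be an involution on a group $G$ and let $\sigma\colon G\to\{\pm1\}$ be a group homomorphism (orientation) which is not identically $1$; set $N=\ker\sigma$. Let $R$ be a commutative ring with $1$ and of characteristic different from $2$. For $\alpha=\sum_{g\in G}\alpha_g g\in RG$ define $\alpha^{\sharp}=\sum_{g\in G}\alpha_g\sigma(g)g^*$, and let $(RG)^-=\{\alpha\in RG\mid \alpha^{\sharp}=-\alpha\}$ be the set of skew-symmetric elements. Assume $*$ and $\sigma$ are compatible, i.e. $\sigma(g)=\sigma(g^* )$ for all $g\in G$. If the elements of $(RG)^-$ anticommute, then either (1) $\operatorname{char}R=4$, $G$ is abelian, $*$ is the identity on $N$, and $x^*\ne x$ for all $x\notin N$; or (2) $\operatorname{char}R=4$, $G$ is an SLC group with $*$ the canonical involution, and $x^*\ne x$ for all $x\notin N$. Conversely, if $G$ is a group with an index $2$ subgroup $N$ and $\sigma\colon G\to\{\pm1\}$ is the homomorphism with kernel $N$, then $(RG)^-$ is an anticommutative set in either of the situations (1) or (2).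
   Context: A group $G$ is SLC if it has a unique nonidentity commutator $s$ (necessarily central, with $s^2=1$) and the limited commutativity property: two elements $g,h\in G$ commute only if one of $g$, $h$, $gh$ is central. The canonical involution on an SLC group is $g^*=g$ if $g$ is central and $g^*=sg$ otherwise. The map $\sharp$ is an involution of $RG$ (an oriented group involution). *)

(* Defs.v *)
(* groups are MathComp's (possibly infinite) [groupType]
   from boot/monoid.v; the group ring RG is modelled by finitely supported
   functions G -> R (finmap's fsfun with default 0). *)
From HB Require Import structures.
From mathcomp Require Import all_boot all_order all_algebra.
From mathcomp Require Import finmap.
Set Implicit Arguments. Unset Strict Implicit. Unset Printing Implicit Defensive.
Import GRing.Theory.
Local Open Scope ring_scope.

Definition grpring (G : groupType) (R : comRingType) :=
  {fsfun G -> R with 0}.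

Definition gr_mulc (G : groupType) (R : comRingType) (a b : grpring G R)
  (g : G) : R :=
  \sum_(h <- finsupp a) a h * b ((h^-1)%g * g)%g.

Definition is_involution (G : groupType) (star : G -> G) : Prop :=
  (forall g h : G, star (g * h)%g = (star h * star g)%g) /\
  (forall g : G, star (star g) = g).

Definition is_orientation (G : groupType) (sigma : G -> int) : Prop :=
  (forall g : G, sigma g = 1 \/ sigma g = -1) /\
  (forall g h : G, sigma (g * h)%g = sigma g * sigma h).

(* Coefficient of g in alpha^# = sum_h alpha_h sigma(h) h^*  (the unique h with
   h^* = g is h = g^*, as * is an involution). *)
Definition sharpc (G : groupType) (R : comRingType) (star : G -> G)
  (sigma : G -> int) (a : grpring G R) (g : G) : R :=
  a (star g) * (sigma (star g))%:~R.

Definition skew (G : groupType) (R : comRingType) (star : G -> G)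
  (sigma : G -> int) (a : grpring G R) : Prop :=
  forall g : G, sharpc star sigma a g = - a g.

Definition skew_anticommute (G : groupType) (R : comRingType) (star : G -> G)
  (sigma : G -> int) : Prop :=
  forall a b : grpring G R, skew star sigma a -> skew star sigma b ->
    forall g : G, gr_mulc a b g = - gr_mulc b a g.

(* R has characteristic n: n is the additive order of 1 (n = 0 if infinite). *)
Definition ring_char_is (R : comRingType) (n : nat) : Prop :=
  (n%:R = 0 :> R) /\ (forall m : nat, (0 < m)%N -> m%:R = 0 :> R -> (n %| m)%N).

Definition central (G : groupType) (g : G) : Prop :=
  forall h : G, (g * h)%g = (h * g)%g.

Definition abelian_grp (G : groupType) : Prop :=
  forall g h : G, (g * h)%g = (h * g)%g.

Definition SLC_with (G : groupType) (s : G) : Prop :=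
  s <> 1%g /\
  (exists x y : G, [~ x, y]%g = s) /\
  (forall x y : G, [~ x, y]%g = 1%g \/ [~ x, y]%g = s) /\
  (forall g h : G, (g * h)%g = (h * g)%g ->
     central g \/ central h \/ central (g * h)%g).

Definition SLC (G : groupType) : Prop := exists s : G, SLC_with s.

Definition canonical_involution (G : groupType) (s : G) (star : G -> G) : Prop :=
  forall g : G, (central g -> star g = g) /\ (~ central g -> star g = (s * g)%g).

(* Main.v *)
Require Import Defs.
From HB Require Import structures.
From mathcomp Require Import all_boot all_order all_algebra.
From mathcomp Require Import finmap.
From mathcomp Require Import zify ring.
From Stdlib Require Import Classical.
Set Implicit Arguments. Unset Strict Implicit.
Import GRing.Theory.
Local Open Scope fset_scope.
Local Open Scope ring_scope.

Section RingFacts.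
Variable R : comRingType.

Lemma one_nz : (1 : R) = 0 -> False.
Proof. by move=> E; move: (oner_neq0 R); rewrite E eqxx. Qed.

Lemma nz2_of (H : ~ ring_char_is R 2) : (2%:R : R) != 0.
Proof.
apply/eqP=> H2; apply: H; split=> // m _ Hm.
rewrite dvdn2; move: Hm.
rewrite -{1}(odd_double_half m) natrD -muln2 natrM H2 mulr0 addr0.
case: (odd m) => //= E; exfalso; exact: one_nz.
Qed.

Lemma small_contra (h4 : (4%:R : R) = 0) (h2 : (2%:R : R) != 0) n :
  n%:R = 0 :> R -> (0 < n < 4)%N -> False.
Proof.
move=> Hn; case: n Hn => [|[|[|[|n]]]] //= Hn _.
- exact: one_nz.
- by move: h2; rewrite Hn eqxx.
- have : (1 : R) = 0 by rewrite -h4 -(addn1 3) natrD Hn add0r.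
  exact: one_nz.
Qed.

Lemma char4_of (h4 : (4%:R : R) = 0) (h2 : (2%:R : R) != 0) : ring_char_is R 4.
Proof.
split=> // m _ Hm.
have Hr : (m %% 4)%:R = 0 :> R.
  by move: Hm; rewrite {1}(divn_eq m 4) natrD natrM h4 mulr0 add0r.
apply/eqP; case E: (m %% 4)%N => //.
exfalso; apply: (@small_contra h4 h2 (m %% 4)%N) => //.
by rewrite E /= -E ltn_mod.
Qed.

End RingFacts.

Section GR.
Variables (G : groupType) (R : comRingType).

Lemma gr_mulcE (a b : grpring G R) g (S : {fset G}) :
  finsupp a `<=` S -> gr_mulc a b g = \sum_(h <- S) a h * b (h^-1 * g)%g.
Proof.
move=> sub; rewrite /gr_mulc; apply: big_fset_incl => // x _.
by rewrite mem_finsupp negbK => /eqP ->; rewrite mul0r.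
Qed.

Definition ind (S : {fset G}) : grpring G R := [fsfun x in S => (1:R) | 0].

Lemma indE S g : ind S g = (g \in S)%:R.
Proof. by rewrite /ind fsfunE; case: (g \in S). Qed.

Lemma finsupp_ind S : finsupp (ind S) `<=` S.
Proof.
apply/fsubsetP=> h; rewrite mem_finsupp indE.
by case: (h \in S) => //; rewrite eqxx.
Qed.

Lemma ind2E (y z w : G) : y != z ->
  ind [fset y; z] w = (w == y)%:R + (w == z)%:R.
Proof.
move=> yz; rewrite indE in_fset2.
case: eqP => [->|_]; last by rewrite add0r.
by rewrite (negbTE yz) addr0.
Qed.

Lemma ind1E (y w : G) : ind [fset y] w = (w == y)%:R.
Proof. by rewrite indE inE. Qed.

Lemma mulc_ind2 (x y : G) b g : x != y ->
  gr_mulc (ind [fset x; y]) b g = b (x^-1 * g)%g + b (y^-1 * g)%g.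
Proof.
move=> xy; rewrite (gr_mulcE _ _ (finsupp_ind _)).
rewrite big_fsetU1 ?inE // big_seq_fset1 !indE !inE !eqxx orbT /=.
by rewrite !mul1r.
Qed.

Lemma mulc_ind1 (x : G) b g :
  gr_mulc (ind [fset x]) b g = b (x^-1 * g)%g.
Proof.
by rewrite (gr_mulcE _ _ (finsupp_ind _)) big_seq_fset1 indE inE eqxx mul1r.
Qed.

End GR.

Section GrpFacts.
Variables (G : groupType).
Local Open Scope group_scope.

Lemma eq_mulVg (x g y : G) : (x^-1 * g == y) = (g == x * y).
Proof.
apply/eqP/eqP => [<-|->]; first by rewrite mulVKg.
by rewrite mulKg.
Qed.

Lemma mulg_eq2l (z u v : G) : (z * u == z * v) = (u == v).
Proof. by apply/eqP/eqP => [/mulgI|->]. Qed.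

Lemma mulg_eq2r (z u v : G) : (u * z == v * z) = (u == v).
Proof. by apply/eqP/eqP => [/mulIg|->]. Qed.

Lemma le1 (w u v : G) : u != v -> ((w == u) + (w == v) <= 1)%N.
Proof.
move=> uv; case: (w =P u) => [->|_] /=; first by rewrite (negbTE uv).
by case: (w == v).
Qed.

Variables (star : G -> G) (sigma : G -> int).
Hypothesis Hinv : is_involution star.
Hypothesis Hor : is_orientation sigma.

Lemma starK g : star (star g) = g. Proof. by case: Hinv. Qed.
Lemma starM g h : star (g * h) = star h * star g. Proof. by case: Hinv. Qed.
Lemma star_eq g h : (star g == star h) = (g == h).
Proof. by apply/eqP/eqP => [E|->]; rewrite // -(starK g) E starK. Qed.
Lemma star1 : star 1 = 1.
Proof.
have := starM 1 1; rewrite mulg1 => E.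
by apply: (@mulgI _ (star 1)); rewrite -E mulg1.
Qed.
Lemma starV g : star g^-1 = (star g)^-1.
Proof.
apply: (@mulIg _ (star g)); rewrite mulVg -starM mulgV; exact: star1.
Qed.

Lemma sigM g h : sigma (g * h) = (sigma g * sigma h)%R. Proof. by case: Hor. Qed.
Lemma sig_cases g : sigma g = 1%R \/ sigma g = (-1)%R. Proof. by case: Hor. Qed.
Lemma sig1 : sigma 1 = 1%R.
Proof.
have := sigM 1 1; rewrite mulg1; case: (sig_cases 1) => -> //.
Qed.
Lemma sigV g : sigma g^-1 = sigma g.
Proof.
have := sigM g g^-1; rewrite mulgV sig1.
by case: (sig_cases g) => ->; case: (sig_cases g^-1) => ->.
Qed.

End GrpFacts.

Section Fwd.
Variables (G : groupType) (R : comRingType) (star : G -> G) (sigma : G -> int).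
Hypothesis Hinv : is_involution star.
Hypothesis Hor : is_orientation sigma.
Hypothesis Hcomp : forall g, sigma (star g) = sigma g.
Hypothesis Hac : skew_anticommute R star sigma.
Hypothesis H2 : (2%:R : R) != 0.


Lemma skew_pair x : sigma x = (-1)%R -> (star x) != x ->
  Defs.skew star sigma (@ind G R [fset x; (star x)]%fset).
Proof.
move=> sx nx g; rewrite /sharpc.
have nx' : x != (star x) by rewrite eq_sym.
rewrite !ind2E // (star_eq Hinv) -{1}(starK Hinv x) (star_eq Hinv) Hcomp.
case: (g =P x) => [->|gx]; first by rewrite sx eq_sym (negbTE nx) /=; rewrite mulrN1 add0r addr0.
case: (g =P (star x)) => [->|gx'] /=; first by rewrite Hcomp sx mulrN1 add0r addr0.
by rewrite !mulr0n add0r mul0r oppr0.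
Qed.

Lemma skew_single x : sigma x = (-1)%R -> (star x) = x ->
  Defs.skew star sigma (@ind G R [fset x]%fset).
Proof.
move=> sx fx g; rewrite /sharpc !ind1E -{1}fx (star_eq Hinv) Hcomp.
by case: (g =P x) => [->|_] /=; rewrite ?sx ?mulrN1 ?mul0r ?oppr0.
Qed.

Lemma fixT x : sigma x = (-1)%R -> (star x) != x.
Proof.
move=> sx; apply/eqP=> fx.
have := Hac (skew_single sx fx) (skew_single sx fx) (x * x)%g.
rewrite mulc_ind1 ind1E mulKg eqxx => E.
have E1 : (1:R) = -1 by exact: E.
by apply: (negP H2); rewrite mulr2n {1}E1 addNr.
Qed.

Local Open Scope group_scope.

Lemma cnt8 x y g : sigma x = (-1)%R -> sigma y = (-1)%R ->
  (((g == (x * y)%g) + (g == (x * star y)%g) + (g == (star x * y)%g)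
   + (g == (star x * star y)%g) + (g == (y * x)%g) + (g == (y * star x)%g)
   + (g == (star y * x)%g) + (g == (star y * star x)%g))%N%:R = 0 :> R).
Proof.
move=> sx sy.
have Ha := skew_pair sx (fixT sx); have Hb := skew_pair sy (fixT sy).
have := Hac Ha Hb g; move/eqP; rewrite -addr_eq0 => /eqP.
have nx : x != (star x) by rewrite eq_sym fixT.
have ny : y != (star y) by rewrite eq_sym fixT.
rewrite !mulc_ind2 // !ind2E // !eq_mulVg => E.
by rewrite !natrD -E !addrA.
Qed.

Lemma four0 x : sigma x = (-1)%R -> (4%:R : R) = 0.
Proof.
move=> sx; have nx := fixT sx.
have := cnt8 (x * star x) sx sx.
have e1 : (x * star x == x * x) = false by rewrite mulg_eq2l (negbTE nx).
have e2 : (x * star x == star x * star x) = false.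
  by rewrite mulg_eq2r eq_sym (negbTE nx).
rewrite eqxx e1 e2.
case: (x * star x == star x * x) => E; first exact: E.
by exfalso; apply: (negP H2); apply/eqP; exact: E.
Qed.

Lemma neqA (z u v : G) : u != v -> (z * v)%g != (z * u)%g.
Proof. by rewrite mulg_eq2l eq_sym. Qed.

Hypothesis h4 : (4%:R : R) = 0.

Lemma T1 x y : sigma x = (-1)%R -> sigma y = (-1)%R -> x * star y = star x * y.
Proof.
move=> sx sy; apply/eqP; apply/negPn/negP => H.
have nx := fixT sx; have ny := fixT sy.
have := cnt8 (x * star y) sx sy.
have e1 : (x * star y == x * y) = false by rewrite mulg_eq2l (negbTE ny).
have e3 : (x * star y == star x * star y) = false.
  by rewrite mulg_eq2r eq_sym (negbTE nx).
rewrite eqxx e1 e3 (negbTE H) => E.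
have L1 := le1 (x * star y) (neqA y nx).
have L2 := le1 (x * star y) (neqA (star y) nx).
apply: (small_contra h4 H2 E); rewrite /=; lia.
Qed.

Lemma T2 x y : sigma x = (-1)%R -> sigma y = (-1)%R -> x * y = star x * star y.
Proof.
move=> sx sy; apply/eqP; apply/negPn/negP => H.
have nx := fixT sx; have ny := fixT sy.
have := cnt8 (x * y) sx sy.
have e1 : (x * y == x * star y) = false by rewrite mulg_eq2l eq_sym (negbTE ny).
have e2 : (x * y == star x * y) = false by rewrite mulg_eq2r eq_sym (negbTE nx).
rewrite eqxx e1 e2 (negbTE H) => E.
have L1 := le1 (x * y) (neqA y nx).
have L2 := le1 (x * y) (neqA (star y) nx).
apply: (small_contra h4 H2 E); rewrite /=; lia.
Qed.

Lemma T3 x y : sigma x = (-1)%R -> sigma y = (-1)%R ->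
  y * x = x * y \/ y * x = x * star y.
Proof.
move=> sx sy; have nx := fixT sx; have ny := fixT sy.
case: (y * x =P x * y) => [|H1]; first by left.
case: (y * x =P x * star y) => [|H2']; first by right.
exfalso.
have := cnt8 (y * x) sx sy.
rewrite -(T1 sx sy) -(T2 sx sy).
have e1 : (y * x == y * star x) = false by rewrite mulg_eq2l eq_sym (negbTE nx).
have e2 : (y * x == star y * x) = false by rewrite mulg_eq2r eq_sym (negbTE ny).
have e3 : (y * x == x * y) = false by apply/eqP.
have e4 : (y * x == x * star y) = false by apply/eqP.
rewrite eqxx e1 e2 e3 e4 => E.
apply: (small_contra h4 H2 E); rewrite /=.
by case: (y * x == star y * star x).
Qed.

End Fwd.

Section GT.
Variables (G : groupType) (star : G -> G) (sigma : G -> int).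
Hypothesis Hinv : is_involution star.
Hypothesis Hor : is_orientation sigma.
Hypothesis Hcomp : forall g, sigma (star g) = sigma g.
Hypothesis Hfix : forall x, sigma x = (-1)%R -> star x != x.
Local Open Scope group_scope.
Hypothesis HT1 : forall x y, sigma x = (-1)%R -> sigma y = (-1)%R -> x * star y = star x * y.
Hypothesis HT2 : forall x y, sigma x = (-1)%R -> sigma y = (-1)%R -> x * y = star x * star y.
Hypothesis HT3 : forall x y, sigma x = (-1)%R -> sigma y = (-1)%R ->
  y * x = x * y \/ y * x = x * star y.
Variable x0 : G.
Hypothesis sx0 : sigma x0 = (-1)%R.

Let sM := sigM Hor.
Let sV := sigV Hor.

Definition cc := locked (x0^-1 * star x0).
Lemma ccE : cc = x0^-1 * star x0. Proof. by rewrite /cc -lock. Qed.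

Lemma starT (y : G) : sigma y = (-1)%R -> star y = cc * y.
Proof.
move=> sy; apply: (@mulgI _ x0); rewrite HT1 // ccE -mulgA mulVKg //.
Qed.

Lemma cx0 : cc * x0 = x0 * cc.
Proof. by rewrite -starT // ccE mulVKg. Qed.

Lemma cc2 : cc * cc = 1.
Proof.
have := HT2 sx0 sx0; rewrite !starT //.
have -> : cc * x0 * (cc * x0) = cc * cc * (x0 * x0).
  by rewrite -!mulgA; congr (_ * _); rewrite !mulgA cx0.
by rewrite -{1}(mul1g (x0 * x0)) => /mulIg.
Qed.

Lemma ccT (y : G) : sigma y = (-1)%R -> cc * y = y * cc.
Proof.
move=> sy; have := HT2 sy sx0; rewrite !starT //.
have -> : cc * y * (cc * x0) = cc * y * cc * x0 by rewrite !mulgA.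
move/mulIg => E.
by rewrite [in RHS]E -!mulgA cc2 mulg1.
Qed.

Lemma sig_xN (g : G) : sigma g = 1%R -> sigma (x0^-1 * g) = (-1)%R.
Proof. by move=> sg; rewrite sM sV sx0 sg. Qed.

Lemma cc_central (g : G) : cc * g = g * cc.
Proof.
case: (sig_cases Hor g) => sg; last exact: ccT.
rewrite -(mulVKg x0 g); set t := x0^-1 * g.
have st : sigma t = (-1)%R by exact: sig_xN.
rewrite mulgA cx0 -!mulgA (ccT st) /t; by rewrite !mulgA.
Qed.

Lemma cc_neq1 : cc != 1.
Proof.
apply/eqP => E; have := Hfix sx0; rewrite starT // E mul1g eqxx //.
Qed.

Lemma starN (g x : G) : sigma g = 1%R -> sigma x = (-1)%R -> star g = x^-1 * g * x.
Proof.
move=> sg sx; set t := x^-1 * g.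
have st : sigma t = (-1)%R by rewrite /t sM sV sx sg.
rewrite -{1}(mulVKg x g) -/t (starM Hinv) !starT //.
by rewrite (ccT st) -mulgA (mulgA cc cc x) cc2 mul1g.
Qed.

Lemma Nab (g h : G) : sigma g = 1%R -> sigma h = 1%R -> g * h = h * g.
Proof.
move=> sg sh.
set g' := x0 * g * x0^-1.
have sg' : sigma g' = 1%R by rewrite /g' !sM sV sx0 sg.
have sxh : sigma (x0 * h) = (-1)%R by rewrite sM sx0 sh.
have := starN sg' sxh; rewrite (starN sg' sx0) /g'.
have -> : x0^-1 * (x0 * g * x0^-1) * x0 = g by rewrite -!mulgA mulKg mulVg mulg1.
have -> : (x0 * h)^-1 * (x0 * g * x0^-1) * (x0 * h) = h^-1 * g * h.
  by rewrite invgM -!mulgA !mulKg.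
move=> E; by rewrite [in RHS]E mulgA mulVKg.
Qed.

Lemma starN_cases (g : G) : sigma g = 1%R -> star g = g \/ star g = cc * g.
Proof.
move=> sg; have st := sig_xN sg; rewrite (starN sg sx0).
case: (HT3 sx0 st) => E; [left|right]; rewrite E; first by rewrite mulVKg.
by rewrite starT // mulgA -cx0 -mulgA mulVKg.
Qed.

Lemma commNT (g h : G) : sigma g = 1%R -> sigma h = (-1)%R ->
  g * h = h * g \/ g * h = cc * (h * g).
Proof.
move=> sg sh; have Eq := starN sg sh.
case: (starN_cases sg) => E'; rewrite E' in Eq.
  by left; rewrite [in RHS]Eq mulgA mulVKg.
right; have e : h * (cc * g) = g * h by rewrite Eq mulgA mulVKg.
by rewrite -e mulgA -(ccT sh) -mulgA.
Qed.

Lemma comm_all (g h : G) : g * h = h * g \/ g * h = cc * (h * g).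
Proof.
case: (sig_cases Hor g) => sg; case: (sig_cases Hor h) => sh.
- by left; apply: Nab.
- exact: commNT.
- case: (commNT sh sg) => E; first by left.
  by right; rewrite E mulgA cc2 mul1g.
- case: (HT3 sh sg) => E; first by left.
  by right; rewrite E starT // mulgA -(ccT sh) -mulgA.
Qed.

Lemma central_N (g : G) : sigma g = 1%R -> (central g <-> star g = g).
Proof.
move=> sg; split.
  by move=> cg; rewrite (starN sg sx0) -mulgA cg mulKg.
move=> fg h; case: (sig_cases Hor h) => sh; first exact: Nab.
have := starN sg sh; rewrite fg => Eq.
by rewrite [in RHS]Eq mulgA mulVKg.
Qed.

Lemma centralT_ab (x : G) : sigma x = (-1)%R -> central x -> abelian_grp G.
Proof.
move=> sx cx.
have nxm : forall n m, n * (x * m) = x * (n * m).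
  by move=> n m; rewrite mulgA -cx -mulgA.
have dec : forall a, sigma a = 1%R \/ (sigma (x^-1 * a) = 1%R /\ a = x * (x^-1 * a)).
  move=> a; case: (sig_cases Hor a) => sa; first by left.
  by right; rewrite mulVKg sM sV sx sa.
move=> a b.
case: (dec a) => [sa|[sn ->]]; case: (dec b) => [sb|[sm ->]].
- exact: Nab.
- by rewrite nxm -mulgA (Nab sa sm).
- by rewrite nxm -mulgA (Nab sn sb).
- by rewrite -mulgA nxm -[in RHS]mulgA nxm (Nab sn sm).
Qed.

Lemma ccab (a b : G) : cc * a * (cc * b) = a * b.
Proof. by rewrite cc_central -mulgA (mulgA cc cc b) cc2 mul1g. Qed.

Lemma LC (g h : G) : g * h = h * g -> central g \/ central h \/ central (g * h).
Proof.
move=> gh.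
case: (sig_cases Hor g) => sg; case: (sig_cases Hor h) => sh.
- case: (starN_cases sg) => eg; first by left; apply/(central_N sg).
  case: (starN_cases sh) => eh; first by right; left; apply/(central_N sh).
  have s' : sigma (g * h) = 1%R by rewrite sM sg sh.
  right; right; apply/(central_N s').
  by rewrite (starM Hinv) eg eh ccab.
- left; apply/(central_N sg); by rewrite (starN sg sh) -mulgA gh mulKg.
- right; left; apply/(central_N sh); by rewrite (starN sh sg) -mulgA -gh mulKg.
- have s' : sigma (g * h) = 1%R by rewrite sM sg sh.
  right; right; apply/(central_N s').
  by rewrite (starM Hinv) !starT // ccab.
Qed.

Lemma commg_cases (g h : G) : [~ g, h] = 1 \/ [~ g, h] = cc.
Proof.
rewrite commgEl conjgE.
case: (comm_all g h) => E; rewrite E; [left|right].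
  by rewrite mulKg mulVg.
by rewrite cc_central -mulgA mulKg mulKg.
Qed.

Lemma canon : ~ abelian_grp G -> canonical_involution cc star.
Proof.
move=> nab g; case: (sig_cases Hor g) => sg; split.
- by move/(central_N sg).
- move=> ncg; case: (starN_cases sg) => // eg.
  by exfalso; apply: ncg; apply/(central_N sg).
- by move=> cg; exfalso; apply: nab; exact: (centralT_ab sg).
- by move=> _; rewrite starT.
Qed.

Lemma slc : ~ abelian_grp G -> SLC_with cc.
Proof.
move=> nab; split; first by apply/eqP; exact: cc_neq1.
split.
  have [g Hg] : exists g : G, ~ (forall h : G, g * h = h * g).
    apply: (Classical_Pred_Type.not_all_ex_not _ (fun g : G => forall h, g * h = h * g)).
    move=> H; apply: nab => a b; exact: H.
  have [h Hh] := Classical_Pred_Type.not_all_ex_not _ _ Hg.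
  exists g, h; case: (commg_cases g h) => // E; exfalso; apply: Hh.
  by apply/(@commgP _ g h)/eqP.
split; first exact: commg_cases.
exact: LC.
Qed.

End GT.

Lemma pair_sum (T : choiceType) (V : zmodType) (tau : T -> T) (F : T -> V) :
  (forall x, tau (tau x) = x) -> (forall x, F (tau x) = - F x) ->
  (forall x, tau x = x -> F x = 0) ->
  forall S : {fset T}, (forall x, x \in S -> tau x \in S) -> \sum_(x <- S) F x = 0.
Proof.
move=> tK Ft Ff.
suff H : forall n (S : {fset T}), (#|`S| <= n)%N ->
    (forall x, x \in S -> tau x \in S) -> \sum_(x <- S) F x = 0.
  by move=> S; apply: (H _ S (leqnn _)).
elim=> [|n IH] S hS cS.
  by move: hS; rewrite leqn0 => /eqP /cardfs0_eq ->; rewrite big_seq_fset0.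
case: (S =P fset0) => [->|/eqP /fset0Pn [x xS]]; first by rewrite big_seq_fset0.
have cardS := cardfsD1 x S; rewrite xS in cardS.
rewrite (big_fsetD1 _ xS) /=.
case: (tau x =P x) => tx.
  rewrite (Ff x tx) add0r; apply: IH; first by move: hS; rewrite cardS.
  move=> y; rewrite !in_fsetD1 => /andP [yx yS]; rewrite cS // andbT.
  by apply/eqP => E; move/eqP: yx; apply; rewrite -(tK y) E tx.
have txS : tau x \in S `\ x by rewrite in_fsetD1 cS // andbT; apply/eqP.
rewrite (big_fsetD1 _ txS) /= Ft addrA addrN add0r.
have cardS' := cardfsD1 (tau x) (S `\ x); rewrite txS in cardS'.
apply: IH; first by move: hS; rewrite cardS cardS'; lia.
move=> y; rewrite !in_fsetD1 => /andP [ytx /andP [yx yS]].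
rewrite cS // andbT; apply/andP; split; apply/eqP => E.
  by move/eqP: yx; apply; rewrite -(tK y) E.
by move/eqP: ytx; apply; rewrite -(tK y) E.
Qed.

Section Conv.
Variables (G : groupType) (R : comRingType).

Lemma anti_from (a b : grpring G R) (g : G) (tau : G -> G) :
  (forall x, tau (tau x) = x) ->
  (forall u, a (tau u) * (b ((tau u)^-1 * g)%g + b (g * (tau u)^-1)%g)
             = - (a u * (b (u^-1 * g)%g + b (g * u^-1)%g))) ->
  (forall u, tau u = u -> a u * (b (u^-1 * g)%g + b (g * u^-1)%g) = 0) ->
  gr_mulc a b g = - gr_mulc b a g.
Proof.
move=> tK Ft Ff.
set A := finsupp a `|` [fset (h^-1 * g)%g | h in finsupp b].
set S := A `|` [fset tau x | x in A].
have cS : forall x, x \in S -> tau x \in S.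
  move=> x /fsetUP [xA|/imfsetP [y yA ->]]; apply/fsetUP.
    by right; apply: in_imfset.
  by left; rewrite tK.
have e1 : gr_mulc a b g = \sum_(u <- S) a u * b (u^-1 * g)%g.
  apply: gr_mulcE; apply/fsubsetP => x xa; rewrite !in_fsetU.
  by rewrite xa.
have e2 : gr_mulc b a g = \sum_(u <- S) a u * b (g * u^-1)%g.
  rewrite (@gr_mulcE _ _ b a g [fset (g * u^-1)%g | u in S]).
    rewrite big_imfset /=.
      by apply: eq_bigr => u _; rewrite invgM invgK mulgVK mulrC.
    by move=> u v _ _ /mulgI /invg_inj.
  apply/fsubsetP => h hb; apply/imfsetP; exists (h^-1 * g)%g.
    by rewrite /= !in_fsetU (in_imfset _ (fun h => (h^-1 * g)%g) hb) orbT.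
  by rewrite invgM invgK mulgA mulgV mul1g.
apply/eqP; rewrite -addr_eq0; apply/eqP.
rewrite e1 e2 -big_split /=.
under eq_bigr do rewrite -mulrDr.
exact: (pair_sum tK Ft Ff cS).
Qed.

End Conv.

Section Conv2.
Variables (G : groupType) (R : comRingType) (star : G -> G) (sigma : G -> int).
Hypothesis Hinv : is_involution star.
Hypothesis Hor : is_orientation sigma.
Hypothesis Hcomp : forall g, sigma (star g) = sigma g.
Hypothesis h4 : (4%:R : R) = 0.

Lemma i1 : ((1 : int)%:~R : R) = 1. Proof. by []. Qed.
Lemma iN1 : ((-1 : int)%:~R : R) = -1. Proof. by []. Qed.

Lemma mod4 (Z X Y : R) : X - Y = 4%:R * Z -> X = Y.
Proof. by rewrite h4 mul0r => /eqP; rewrite subr_eq0 => /eqP. Qed.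

Lemma skE (c : grpring G R) : Defs.skew star sigma c ->
  forall h, c (star h) * (sigma h)%:~R = - c h.
Proof. by move=> Hc h; have := Hc h; rewrite /sharpc Hcomp. Qed.

Lemma skT (c : grpring G R) h : Defs.skew star sigma c -> sigma h = (-1)%R ->
  c (star h) = c h.
Proof. by move=> Hc sh; have := skE Hc h; rewrite sh iN1 mulrN1 => /oppr_inj. Qed.

Lemma skF (c : grpring G R) h : Defs.skew star sigma c -> sigma h = 1%R ->
  star h = h -> c h + c h = 0.
Proof.
by move=> Hc sh fh; have := skE Hc h; rewrite sh i1 mulr1 fh => E; rewrite {1}E addNr.
Qed.

Local Open Scope group_scope.

Lemma conv1 : abelian_grp G -> (forall x, sigma x = 1%R -> star x = x) ->
  (forall x, sigma x <> 1%R -> star x <> x) -> skew_anticommute R star sigma.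
Proof.
move=> ab fixN fixT a b Ha Hb g.
have Fu : forall u, g * u^-1 = u^-1 * g by move=> u; apply: ab.
apply: (anti_from (tau := star)) => [x|u|u]; rewrite ?Fu.
- exact: (starK Hinv x).
- case: (sig_cases Hor u) => su.
    rewrite fixN // mulrDr -mulrDl (skF Ha su (fixN u su)) mul0r oppr0 //.
  rewrite (skT Ha su).
  case: (sig_cases Hor g) => sg.
    have sv : sigma (u^-1 * g) = (-1)%R by rewrite (sigM Hor) (sigV Hor) su sg.
    have -> : (star u)^-1 * g = star (u^-1 * g).
      by rewrite (starM Hinv) (fixN _ sg) (starV Hinv) ab.
    rewrite (skT Hb sv).
    by apply: (mod4 (Z := (a u * b (u^-1 * g)%g)%R)); ring.
  have sv : sigma (u^-1 * g) = 1%R by rewrite (sigM Hor) (sigV Hor) su sg.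
  have sv' : sigma ((star u)^-1 * g) = 1%R by rewrite (sigM Hor) (sigV Hor) Hcomp su sg.
  rewrite (skF Hb sv (fixN _ sv)) (skF Hb sv' (fixN _ sv')) mulr0 oppr0 //.
- move=> fu; case: (sig_cases Hor u) => su; last by exfalso; apply: (fixT u) => //; rewrite su.
  by rewrite mulrDr -mulrDl (skF Ha su fu) mul0r.
Qed.

Ltac fin4 A B := first [ by apply: (mod4 (Z := 0%R)); ring
                       | by apply: (mod4 (Z := (A * B)%R)); ring ].

Lemma conv2 s : SLC_with s -> canonical_involution s star ->
  (forall x, sigma x <> 1%R -> star x <> x) -> skew_anticommute R star sigma.
Proof.
move=> [s1 [[x1 [y1 Exy]] [Hcomm _]]] can fixT.
have cs : central s.
  move=> z; case: (Hcomm (x1 ^ z) (y1 ^ z)); rewrite -conjRg Exy => E.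
    by exfalso; move/eqP: E; rewrite conjg_eq1 => /eqP.
  by rewrite -[in RHS]E conjgE mulVKg.
have nc_x1 : ~ central x1.
  move=> cx; apply: s1; rewrite -Exy commgEl conjgE (cx y1) mulKg mulVg //.
have cen_s : forall x, central (s * x) -> central x.
  move=> x H h; apply: (@mulgI _ s).
  by rewrite mulgA H mulgA -(cs h) -mulgA.
have stnc : forall w, ~ central w -> star w = s * w by move=> w; case: (can w).
have stc : forall w, central w -> star w = w by move=> w; case: (can w).
have s2 : s * s = 1.
  have := starK Hinv x1; rewrite (stnc _ nc_x1) (stnc (s * x1)).
    by rewrite mulgA -{2}(mul1g x1) => /mulIg.
  by move/cen_s.
have sV : s^-1 = s by apply: mulg1_eq.
have cN : forall w, central w -> sigma w = 1%R.
  move=> w cw; case: (sig_cases Hor w) => // sw; exfalso.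
  by apply: (fixT w _ (stc w cw)); rewrite sw.
have dbl : forall (c : grpring G R) w, Defs.skew star sigma c -> central w ->
    (c w + c w = 0)%R.
  by move=> c w Hc cw; apply: (skF Hc (cN w cw) (stc w cw)).
have skS : forall (c : grpring G R) w, Defs.skew star sigma c -> ~ central w ->
    c (s * w) = (- (c w * (sigma w)%:~R))%R.
  move=> c w Hc cw; have := skE Hc w; rewrite (stnc w cw).
  case: (sig_cases Hor w) => ->; rewrite ?i1 ?iN1 ?mulr1 ?mulrN1 // => E.
  by rewrite -E opprK.
have comm2 : forall x y : G, x * y = y * x \/ x * y = s * (y * x).
  move=> x y; case: (Hcomm x y) => E; first by left; apply/commgP; rewrite E.
  by right; rewrite commgC E cs.
have cs_mul : forall x, central x -> central (s * x).
  by move=> x cx h; rewrite -mulgA (cx h) mulgA (cs h) -mulgA.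
move=> a b Ha Hb g.
have cinv : forall u, central u -> g * u^-1 = u^-1 * g.
  by move=> u cu; apply: (@mulgI _ u); rewrite mulVKg mulgA (cu g) mulgK.
have Fzero : forall u, central u ->
    (a u * (b (u^-1 * g)%g + b (g * u^-1)%g) = 0)%R.
  by move=> u cu; rewrite cinv // mulrDr -mulrDl (dbl _ _ Ha cu) mul0r.
apply: (anti_from (tau := star)) => [x|u|u].
- exact: (starK Hinv x).
- case: (Classical_Prop.classic (central u)) => cu.
    by rewrite (stc u cu) Fzero // oppr0.
  rewrite (stnc u cu); set v := u^-1 * g.
  have e1 : (s * u)^-1 * g = s * v by rewrite invgM sV /v mulgA (cs u^-1).
  have e2 : g * (s * u)^-1 = s * (g * u^-1) by rewrite invgM sV mulgA cs.
  rewrite e1 e2 (skS _ _ Ha cu).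
  case: (Classical_Prop.classic (central v)) => cv.
    have ev' : g * u^-1 = v by rewrite -{1}(mulVKg u g) -/v -(cv u) mulgK.
    by rewrite ev' (dbl _ _ Hb cv) (dbl _ _ Hb (cs_mul _ cv)) !mulr0 oppr0.
  case: (comm2 u v) => E.
    have ev' : g * u^-1 = v by rewrite -{1}(mulVKg u g) -/v E mulgK.
    rewrite ev' (skS _ _ Hb cv).
    by case: (sig_cases Hor u) => ->; case: (sig_cases Hor v) => ->;
      rewrite ?i1 ?iN1; fin4 (a u) (b v).
  have ev' : g * u^-1 = s * v by rewrite -{1}(mulVKg u g) -/v E mulgA mulgK.
  rewrite ev' (mulgA s s v) s2 mul1g (skS _ _ Hb cv).
  by case: (sig_cases Hor u) => ->; case: (sig_cases Hor v) => ->;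
    rewrite ?i1 ?iN1; fin4 (a u) (b v).
- move=> fu; apply: Fzero.
  case: (Classical_Prop.classic (central u)) => // cu; exfalso; apply: s1.
  by move: fu; rewrite (stnc u cu) -{2}(mul1g u) => /mulIg.
Qed.

End Conv2.

Unset Implicit Arguments.
Local Open Scope ring_scope.

Theorem mainTheorem1 (G : groupType) (R : comRingType)
  (star : G -> G) (sigma : G -> int) :
  is_involution star ->
  is_orientation sigma ->
  (exists g : G, sigma g <> 1) ->
  (forall g : G, sigma (star g) = sigma g) ->
  ~ ring_char_is R 2 ->
  skew_anticommute R star sigma <->
  ( (ring_char_is R 4 /\ abelian_grp G /\
       (forall x : G, sigma x = 1 -> star x = x) /\
       (forall x : G, sigma x <> 1 -> star x <> x))
  \/ (ring_char_is R 4 /\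
       (exists s : G, SLC_with s /\ canonical_involution s star) /\
       (forall x : G, sigma x <> 1 -> star x <> x)) ).
Proof.
move=> Hinv Hor [g0 Hg0] Hcomp Hn2.
have sx0 : sigma g0 = -1 by case: (sig_cases Hor g0).
have H2 := nz2_of Hn2.
split.
- move=> Hac.
  have h4 := four0 Hinv Hcomp Hac H2 sx0.
  have Hfix := fixT Hinv Hcomp Hac H2.
  have HT1 := T1 Hinv Hcomp Hac H2 h4.
  have HT2 := T2 Hinv Hcomp Hac H2 h4.
  have HT3 := T3 Hinv Hcomp Hac H2 h4.
  have fixNeq : forall x, sigma x <> 1 -> star x <> x.
    move=> x sx; have sx' : sigma x = -1 by case: (sig_cases Hor x).
    by apply/eqP; apply: Hfix.
  have c4 := char4_of h4 H2.
  case: (Classical_Prop.classic (abelian_grp G)) => ab.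
    left; split => //; split => //; split => // x sx.
    by rewrite (starN Hinv Hor HT1 HT2 sx0 sx sx0) -mulgA (ab x g0) mulKg.
  right; split => //; split => //.
  exists (cc star g0); split.
    exact: (slc Hinv Hor Hfix HT1 HT2 HT3 sx0 ab).
  exact: (canon Hinv Hor HT1 HT2 HT3 sx0 ab).
- case => [[[h4 _] [ab [fixN fixT']]]|[[h4 _] [[s [Hs Hcan]] fixT']]].
    exact: (conv1 Hinv Hor Hcomp h4 ab fixN fixT').
  exact: (conv2 Hinv Hor Hcomp h4 Hs Hcan fixT').
Qed.
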